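(* For any parity decision tree $T$ on $\{-1,1\}^n$ of depth $d$, $$\mathbf{E}_{\ell\in T}\Big[\Big(\sum_{i=1}^n \ell_i\Big)^2\Big]\le 2d.$$
   Context: A parity decision tree on $\{-1,1\}^n$ is a rooted full binary tree whose internal nodes are labelled by subsets $S\subseteq[n]$, whose two outgoing edges are labelled $-1$ and $1$; an input $x$ follows from a node labelled $S$ the edge labelled $\prod_{i\in S}x_i$, reaching a unique leaf. Depth is the maximum number of internal nodes on a root-to-leaf path. Each leaf is represented as a vector $\ell\in\{-1,0,1\}^n$ where $\ell_i$ is the expected value of $x_i$ over uniformly random inputs $x$ that reach that leaf. $\mathbf{E}_{\ell\in T}$ denotes expectation over the leaf reached by a uniformly random input $x\in\{-1,1\}^n$ (i.e., each leaf weighted by the probability of reaching it). *)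

(* Defs.v *)
From HB Require Import structures.
From mathcomp Require Import all_boot all_order all_algebra.
Set Implicit Arguments. Unset Strict Implicit. Unset Printing Implicit Defensive.
Import Order.TTheory GRing.Theory Num.Theory.
Local Open Scope ring_scope.

(* A point of {-1,1}^n is encoded as x : {ffun 'I_n -> bool};
   coordinate i has real value  xval x i = -1 if x i, else 1. *)
Definition cube (n : nat) := {ffun 'I_n -> bool}.

Definition xval {R : numDomainType} {n : nat} (x : cube n) (i : 'I_n) : R :=
  if x i then -1 else 1.

(* Parity decision trees: a leaf, or a node labelled by S ⊆ [n] with
   a (-1)-subtree and a (1)-subtree. *)
Inductive pdt (n : nat) : Type :=
| PLeaf : pdt n
| PNode : {set 'I_n} -> pdt n -> pdt n -> pdt n.
Arguments PLeaf {n}.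

Definition chi {R : numDomainType} {n : nat} (x : cube n) (S : {set 'I_n}) : R :=
  \prod_(i in S) xval x i.

(* The leaf reached by x, identified by its root-to-leaf path
   (true = edge labelled 1, false = edge labelled -1). *)
Fixpoint reach {R : numDomainType} {n : nat} (t : pdt n) (x : cube n) : seq bool :=
  match t with
  | PLeaf => [::]
  | PNode lab tm tp =>
      if chi (R := R) x lab == 1 then true :: reach (R := R) tp x
      else false :: reach (R := R) tm x
  end.

Fixpoint depth {n : nat} (t : pdt n) : nat :=
  match t with
  | PLeaf => 0%N
  | PNode _ tm tp => (maxn (depth tm) (depth tp)).+1
  end.

Definition leafvec {R : numFieldType} {n : nat} (t : pdt n) (x : cube n)
    (i : 'I_n) : R :=
  (\sum_(y : cube n | reach (R := R) t y == reach (R := R) t x) xval y i)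
  / (#|[set y : cube n | reach (R := R) t y == reach (R := R) t x]|%:R).

(* E_{ℓ ∈ T}[ F ℓ ], the leaf reached by a uniformly random input *)
Definition leafExp {R : numFieldType} {n : nat} (t : pdt n)
    (F : ('I_n -> R) -> R) : R :=
  (\sum_(x : cube n) F (leafvec t x)) / (#|{: cube n}|%:R).

(* Main.v *)
Require Import Defs.
From mathcomp Require Import all_boot all_order all_algebra.
From mathcomp Require Import ring lra zify.
Set Implicit Arguments. Unset Strict Implicit. Unset Printing Implicit Defensive.
Import Order.TTheory GRing.Theory Num.Theory.
Local Open Scope ring_scope.

Section S.
Variable R : realFieldType.
Variable n : nat.
Implicit Types (x y z w a b : cube n).

Definition xorc x y : cube n := [ffun i => x i (+) y i].

Lemma xorcA x y z : xorc (xorc x y) z = xorc x (xorc y z).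
Proof. by apply/ffunP => i; rewrite !ffunE addbA. Qed.
Lemma xorcC x y : xorc x y = xorc y x.
Proof. by apply/ffunP => i; rewrite !ffunE addbC. Qed.
Lemma xorcK x y : xorc (xorc x y) y = x.
Proof. by apply/ffunP => i; rewrite !ffunE -addbA addbb addbF. Qed.

Lemma xval_xor x y i : xval (R:=R) (xorc x y) i = xval x i * xval y i.
Proof. by rewrite /xval ffunE; case: (x i); case: (y i); rewrite /= ?mulN1r ?opprK ?mul1r. Qed.

Lemma xval_sq x i : xval (R:=R) x i * xval x i = 1.
Proof. by rewrite /xval; case: (x i); rewrite ?mulN1r ?opprK ?mul1r. Qed.

Lemma chi_xor x y S : chi (R:=R) (xorc x y) S = chi x S * chi y S.
Proof. rewrite /chi -big_split /=; apply: eq_bigr => i _; exact: xval_xor. Qed.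

Lemma chi_pm x S : chi (R:=R) x S = 1 \/ chi (R:=R) x S = -1.
Proof.
rewrite /chi; apply: (big_ind (fun v : R => v = 1 \/ v = -1)); first by left.
  move=> u v [] -> [] ->; rewrite ?mul1r ?mulr1 ?mulN1r ?opprK; by [left|right].
move=> i _; rewrite /xval; case: (x i); by [right|left].
Qed.

Lemma m1_neq1 : (-1 : R) != 1.
Proof. apply/eqP => H; lra. Qed.

Definition nb x (S : {set 'I_n}) := chi (R:=R) x S != 1.

Lemma nb_xor x y S : nb (xorc x y) S = nb x S (+) nb y S.
Proof.
rewrite /nb chi_xor.
case: (chi_pm x S) => ->; case: (chi_pm y S) => ->;
 rewrite ?mul1r ?mulr1 ?mulN1r ?opprK ?eqxx ?m1_neq1 //.
Qed.


Lemma nb_xor3 x y z S : nb (xorc (xorc x y) z) S = nb x S (+) nb y S (+) nb z S.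
Proof. by rewrite !nb_xor. Qed.

Lemma reach_xor3 (t : pdt n) y z w :
  reach (R:=R) t y = reach (R:=R) t z -> reach (R:=R) t y = reach (R:=R) t w ->
  reach (R:=R) t (xorc (xorc y z) w) = reach (R:=R) t y.
Proof.
elim: t => [//|lab tm IHm tp IHp] /=.
have E : forall v, (chi (R:=R) v lab == 1) = ~~ nb v lab by move=> v; rewrite /nb negbK.
rewrite !E nb_xor3.
case: (nb y lab); case: (nb z lab); case: (nb w lab) => /=; try by move=> [] || move=> _ [].
  by move=> [H1] [H2]; rewrite IHm.
by move=> [H1] [H2]; rewrite IHp.
Qed.

Definition closed3 (A : {set cube n}) :=
  forall y z w, y \in A -> z \in A -> w \in A -> xorc (xorc y z) w \in A.

Lemma halving (A : {set cube n}) x S : closed3 A -> x \in A ->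
  (#|A| <= 2 * #|A :&: [set y | nb y S == nb x S]|)%N.
Proof.
move=> cA xA; set B := [set y | nb y S == nb x S].
rewrite -(cardsID B A) mul2n -addnn leq_add2l.
case: (set_0Vmem (A :\: B)) => [->|[b]]; first by rewrite cards0.
rewrite !inE => /andP [nbB bA].
pose phi y := xorc (xorc y x) b.
have phi_inj : injective phi.
  move=> u v /(congr1 (fun q => xorc (xorc q b) x)); by rewrite /phi !xorcK.
rewrite -(card_imset _ phi_inj); apply: subset_leq_card; apply/subsetP => u.
case/imsetP => v; rewrite !inE => /andP [nv vA] ->.
rewrite cA // /phi nb_xor3.
by move: nv nbB; case: (nb v S); case: (nb b S); case: (nb x S).
Qed.

Definition leaf (t : pdt n) x := [set y | reach (R:=R) t y == reach (R:=R) t x].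

Lemma card_leaf (t : pdt n) (A : {set cube n}) x : closed3 A -> x \in A ->
  (#|A| <= #|A :&: leaf t x| * 2 ^ depth t)%N.
Proof.
elim: t A => [|lab tm IHm tp IHp] A cA xA.
  rewrite /= expn0 muln1; apply: subset_leq_card; apply/subsetP => y yA.
  by rewrite !inE yA.
set A' := A :&: [set y | nb y lab == nb x lab].
have cA' : closed3 A'.
  move=> u v w; rewrite !inE => /andP [uA /eqP nu] /andP [vA /eqP nv] /andP [wA /eqP nw].
  by rewrite cA //= nb_xor3 nu nv nw addbK.
have xA' : x \in A' by rewrite !inE xA eqxx.
apply: (leq_trans (halving lab cA xA)); rewrite -/A'.
have E : forall v, (chi (R:=R) v lab == 1) = ~~ nb v lab by move=> v; rewrite /nb negbK.
rewrite /= expnS mulnCA leq_pmul2l //.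
have [Ex|Ex] := boolP (nb x lab).
  have -> : A :&: leaf (PNode lab tm tp) x = A' :&: leaf tm x.
    apply/setP => y; rewrite !inE /= !E Ex /=.
    by case: (nb y lab); rewrite ?andbT ?andbF //= eqseq_cons.
  apply: (leq_trans (IHm _ cA' xA')); rewrite leq_mul2l leq_pexp2l ?leq_maxl ?orbT //.
have -> : A :&: leaf (PNode lab tm tp) x = A' :&: leaf tp x.
  apply/setP => y; rewrite !inE /= !E (negbTE Ex) /=.
  by case: (nb y lab); rewrite ?andbT ?andbF //= eqseq_cons.
apply: (leq_trans (IHp _ cA' xA')); rewrite leq_mul2l leq_pexp2l ?leq_maxr ?orbT //.
Qed.


Lemma sum_flip (A : {set cube n}) (f : cube n -> R) a b : closed3 A -> a \in A -> b \in A ->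
  (forall y, f (xorc (xorc y a) b) = - f y) -> \sum_(y in A) f y = 0.
Proof.
move=> cA aA bA Hf.
pose s y := xorc (xorc y a) b.
have sK : cancel s s.
  by move=> y; apply/ffunP => i; rewrite !ffunE; case: (y i); case: (a i); case: (b i).
have s_inj : injective s := can_inj sK.
have E : \sum_(y in A) f y = - \sum_(y in A) f y.
  rewrite {1}(reindex_inj s_inj) /= -sumrN; apply: eq_big => y; last by move=> _; exact: Hf.
  apply/idP/idP => H; last exact: cA.
  by rewrite -[y]sK; apply: cA.
lra.
Qed.

End S.

Lemma var_expand (R : realFieldType) (T : finType) (A : {set T}) (u v : T -> R) :
  \sum_(y in A) \sum_(z in A) (u y - u z) * (v y - v z) =
  2 * (#|A|%:R * \sum_(y in A) u y * v y - (\sum_(y in A) u y) * (\sum_(y in A) v y)).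
Proof.
set Q := \sum_(y in A) u y * v y; set Su := \sum_(y in A) u y; set Sv := \sum_(y in A) v y.
have h1 : forall y, \sum_(z in A) (u y - u z) * (v y - v z) =
   #|A|%:R * (u y * v y) + Q - u y * Sv - v y * Su.
  move=> y.
  transitivity (\sum_(z in A) (u y * v y) + \sum_(z in A) (u z * v z)
                - \sum_(z in A) (u y * v z) - \sum_(z in A) (v y * u z)).
    rewrite -big_split /= -!sumrB; apply: eq_bigr => z _; ring.
  by rewrite sumr_const -!mulr_sumr mulr_natl.
rewrite (eq_bigr _ (fun y _ => h1 y)).
rewrite !sumrB big_split /= sumr_const -!mulr_suml -mulr_sumr.
rewrite -/Q -/Su -/Sv -mulr_natr; ring.
Qed.

Section Core.
Variable R : realFieldType.
Variable n : nat.
Implicit Types (x y z w a b : cube n).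

Definition X y i : R := xval (R:=R) y i.
Definition cc (L : {set cube n}) i j :=
  \sum_(y in L) \sum_(z in L) (X y i - X z i) * (X y j - X z j) / 2.

Lemma cc_expand L i j : cc L i j =
  #|L|%:R * \sum_(y in L) X y i * X y j - (\sum_(y in L) X y i) * (\sum_(y in L) X y j).
Proof.
rewrite /cc; under eq_bigr do rewrite -mulr_suml.
by rewrite -mulr_suml var_expand mulrC mulKf // pnatr_eq0.
Qed.

Lemma sq_sum (W : {set 'I_n}) (a : 'I_n -> R) :
  (\sum_(i in W) a i)^+2 / 2 = \sum_(i in W) \sum_(j in W) a i * a j / 2.
Proof.
rewrite expr2 big_distrlr /= mulr_suml; apply: eq_bigr => i _; by rewrite mulr_suml.
Qed.

Lemma sum_cc L (W : {set 'I_n}) : \sum_(i in W) \sum_(j in W) cc L i j =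
  \sum_(y in L) \sum_(z in L) (\sum_(i in W) (X y i - X z i))^+2 / 2.
Proof.
rewrite /cc.
under [RHS]eq_bigr => y _ do under eq_bigr => z _ do rewrite sq_sum.
rewrite pair_big; under eq_bigr do rewrite pair_big.
rewrite [RHS]pair_big; under [RHS]eq_bigr do rewrite pair_big.
by rewrite exchange_big.
Qed.

Definition constc (L : {set cube n}) (i : 'I_n) :=
  [forall y in L, forall z in L, y i == z i].
Definition pc (L : {set cube n}) (i j : 'I_n) :=
  [forall y in L, forall z in L, (y i (+) y j) == (z i (+) z j)].
Definition UU L := [set i | ~~ constc L i & [forall j, (j != i) ==> ~~ pc L i j]].
Definition KK L := [set i | ~~ constc L i & [forall j : 'I_n, (j < i)%N ==> ~~ pc L i j]].

Lemma pc_sym L i j : pc L i j = pc L j i.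
Proof.
by apply/idP/idP => /forall_inP H; apply/forall_inP => y yL; apply/forall_inP => z zL;
  have /forall_inP /(_ z zL) := H y yL; rewrite addbC [z j (+) _]addbC.
Qed.

Lemma pc_trans L i j k : pc L i j -> pc L j k -> pc L i k.
Proof.
move=> /forall_inP H1 /forall_inP H2; apply/forall_inP => y yL; apply/forall_inP => z zL.
have /forall_inP /(_ z zL) := H1 y yL; have /forall_inP /(_ z zL) := H2 y yL.
by case: (y i); case: (y j); case: (y k); case: (z i); case: (z j); case: (z k).
Qed.

Lemma sum_X_zero L i : closed3 L -> ~~ constc L i -> \sum_(y in L) X y i = 0.
Proof.
move=> cL /forall_inPn [a aL] /forall_inPn [b bL] neq.
apply: (sum_flip cL aL bL) => y; rewrite /X !xval_xor.
move: neq; rewrite /xval; case: (a i); case: (b i); case: (y i) => //= _; ring.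
Qed.

Lemma sum_XX_zero L i j : closed3 L -> ~~ pc L i j -> \sum_(y in L) X y i * X y j = 0.
Proof.
move=> cL /forall_inPn [a aL] /forall_inPn [b bL] neq.
apply: (@sum_flip R n L (fun y => X y i * X y j) a b cL aL bL) => y; rewrite /X !xval_xor.
move: neq; rewrite /xval; case: (a i); case: (b i); case: (y i);
  case: (a j); case: (b j); case: (y j) => //= _; ring.
Qed.

Lemma sum_XX_same (L : {set cube n}) i : \sum_(y in L) X y i * X y i = #|L|%:R.
Proof. by under eq_bigr do rewrite /X xval_sq; rewrite sumr_const. Qed.

Lemma card_L_K (L : {set cube n}) : (#|L| <= 2 ^ #|KK L|)%N.
Proof.
pose KT := {i : 'I_n | i \in KK L}.
pose rho (y : cube n) : {ffun KT -> bool} := [ffun k => y (val k)].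
have inj : {in L &, injective rho}.
  move=> y y' yL y'L /ffunP E; apply/ffunP => i.
  suff H : forall m (i : 'I_n), (i < m)%N -> y i = y' i by exact: (H n).
  elim=> [//|m IH] {}i lt_im.
  case iK: (i \in KK L).
    by have := E (exist _ i iK); rewrite !ffunE.
  move: iK; rewrite inE => /negbT; rewrite negb_and negbK => /orP [cst | /forallPn [j]].
    by move/forall_inP: cst => /(_ y yL) /forall_inP /(_ y' y'L) /eqP.
  rewrite negb_imply negbK => /andP [ji /forall_inP /(_ y yL) /forall_inP /(_ y' y'L)].
  rewrite (IH j); last by apply: leq_trans ji _.
  by case: (y i); case: (y' i); case: (y' j).
rewrite -(card_in_imset inj); apply: (leq_trans (max_card _)).
by rewrite card_ffun card_bool card_sig.
Qed.

Lemma card_nU_nK (L : {set cube n}) : (#|~: UU L| <= 2 * #|~: KK L|)%N.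
Proof.
rewrite -(cardsID (~: KK L) (~: UU L)) mul2n -addnn; apply: leq_add.
  by apply: subset_leq_card; apply: subsetIr.
pose f (i : 'I_n) := odflt i [pick j : 'I_n | (i < j)%N && pc L i j].
have Hf : forall i, i \in ~: UU L :\: ~: KK L -> (i < f i)%N && pc L i (f i).
  move=> i; rewrite !inE negbK => /andP [iK iU].
  move: iK iU => /andP [nci /forallP Hlt]; rewrite nci /= negb_forall.
  case/existsP => j; rewrite negb_imply negbK => /andP [nji pij].
  rewrite /f; case: pickP => [k //|/(_ j) /=]; rewrite pij andbT.
  have := Hlt j; rewrite pij implybF -leqNgt leq_eqVlt => /orP [/eqP E|->//].
  by move: nji; rewrite (val_inj E) eqxx.
rewrite -(card_in_imset (f := f)); last first.
  move=> i i' iM i'M E; have /andP [lt1 p1] := Hf i iM; have /andP [lt2 p2] := Hf i' i'M.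
  rewrite -E in lt2 p2; rewrite pc_sym in p2; have p := pc_trans p1 p2.
  move: iM i'M; rewrite !inE !negbK => /andP [/andP [_ /forallP H1] _] /andP [/andP [_ /forallP H2] _].
  case: (ltngtP i i') => [lt|lt|]; last exact: val_inj.
    by have := H2 i; rewrite lt pc_sym p.
  by have := H1 i'; rewrite lt p.
apply: subset_leq_card; apply/subsetP => j /imsetP [i iM ->].
have /andP [lt p] := Hf i iM.
rewrite !inE negb_and negbK; apply/orP; right; rewrite negb_forall; apply/existsP; exists i.
by rewrite lt pc_sym p.
Qed.

Lemma count_U (L : {set cube n}) d : (2 ^ n <= #|L| * 2 ^ d)%N -> (n <= #|UU L| + 2 * d)%N.
Proof.
move=> H.
have H1 : (n <= #|KK L| + d)%N.
  rewrite -(@leq_exp2l 2) // expnD; apply: (leq_trans H); by rewrite leq_mul2r card_L_K orbT.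
have H2 := card_nU_nK L.
have E1 := cardsC (UU L); have E2 := cardsC (KK L).
rewrite card_ord in E1 E2; lia.
Qed.

Lemma core (L : {set cube n}) d : closed3 L -> (2 ^ n <= #|L| * 2 ^ d)%N ->
  (#|L|%:R) ^+ 2 * (n%:R - 2 * d%:R) <=
  \sum_(y in L) \sum_(z in L) (\sum_i (X y i - X z i)) ^+ 2 / 2.
Proof.
move=> cL H.
have cU := count_U H.
set U := UU L; set s : R := #|L|%:R.
have E : \sum_(y in L) \sum_(z in L) (\sum_i (X y i - X z i)) ^+ 2 / 2 =
         \sum_i \sum_j cc L i j.
  transitivity (\sum_(y in L) \sum_(z in L) (\sum_(i in [set: 'I_n]) (X y i - X z i)) ^+ 2 / 2).
    apply: eq_bigr => y _; apply: eq_bigr => z _.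
    by under [in RHS]eq_bigl do rewrite in_setT.
  rewrite -sum_cc; under eq_bigl do rewrite in_setT.
  apply: eq_bigr => i _; by under eq_bigl do rewrite in_setT.
rewrite E (bigID (mem U)) /=.
have EU : forall i, i \in U -> \sum_j cc L i j = s ^+ 2.
  move=> i iU; move: (iU); rewrite inE => /andP [nci /forallP Hj].
  rewrite (bigD1 i) //= big1 ?addr0.
    by rewrite cc_expand sum_XX_same sum_X_zero // mulr0 subr0 expr2.
  move=> j nji; rewrite cc_expand sum_X_zero // mul0r subr0.
  have := Hj j; rewrite nji /= => npc.
  by rewrite sum_XX_zero // mulr0.
have EN : forall i, i \notin U -> \sum_j cc L i j = \sum_(j in ~: U) cc L i j.
  move=> i iU; rewrite (bigID (mem U)) /= big1 ?add0r.
    by apply: eq_bigl => j /=; rewrite in_setC.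
  move=> j jU; move: (jU); rewrite inE => /andP [ncj /forallP Hj].
  have nji : i != j by apply: contraNneq iU => ->.
  rewrite cc_expand (sum_X_zero cL ncj) mulr0.
  under eq_bigr do rewrite mulrC.
  have := Hj i; rewrite nji /= => npc.
  by rewrite sum_XX_zero // mulr0 subr0.
rewrite (eq_bigr _ EU) (eq_bigr _ EN).
have Hge : 0 <= \sum_(i | i \notin U) \sum_(j in ~: U) cc L i j.
  have -> : \sum_(i | i \notin U) \sum_(j in ~: U) cc L i j =
            \sum_(i in ~: U) \sum_(j in ~: U) cc L i j.
    by apply: eq_bigl => i /=; rewrite in_setC.
  rewrite sum_cc; apply: sumr_ge0 => y _; apply: sumr_ge0 => z _.
  by apply: divr_ge0; [apply: sqr_ge0 | ].
rewrite sumr_const.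
have cUR : n%:R <= #|U|%:R + 2 * d%:R :> R.
  by rewrite -natrM -natrD ler_nat.
have s2 : 0 <= s ^+ 2 by apply: sqr_ge0.
rewrite -mulr_natr.
set u : R := #|U|%:R in cUR *.
set S := \sum_(i | i \notin U) _ in Hge *.
nra.
Qed.

End Core.

Section Main.
Variable R : realFieldType.
Variable n : nat.

Lemma sum_setT (F : cube n -> R) : \sum_(y in [set: cube n]) F y = \sum_y F y.
Proof. by apply: eq_bigl => y; rewrite in_setT. Qed.

Lemma closed_setT : closed3 [set: cube n].
Proof. by move=> *; rewrite in_setT. Qed.

Lemma sumg2 : \sum_(y : cube n) (\sum_i @X R n y i) ^+ 2 = n%:R * #|{: cube n}|%:R.
Proof.
under eq_bigr do rewrite expr2 big_distrlr /=.
rewrite exchange_big; under eq_bigr do rewrite exchange_big.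
transitivity (\sum_(i < n) (#|{: cube n}|%:R : R)); last by rewrite sumr_const card_ord mulr_natl.
apply: eq_bigr => i _.
rewrite (bigD1 i) //= [X in _ + X]big1 ?addr0.
  by rewrite -sum_setT sum_XX_same cardsT.
move=> j nji; rewrite -sum_setT sum_XX_zero //; first exact: closed_setT.
apply/forall_inPn; exists [ffun => false]; first by rewrite in_setT.
apply/forall_inPn; exists [ffun k => k == i]; first by rewrite in_setT.
by rewrite !ffunE eqxx (negbTE nji).
Qed.

Lemma dc (T : pdt n) (G : cube n -> R) :
  \sum_x (\sum_(y in @leaf R n T x) G y) / #|@leaf R n T x|%:R = \sum_y G y.
Proof.
have cx : forall x y, y \in @leaf R n T x -> @leaf R n T y = @leaf R n T x.
  by move=> x y; rewrite inE => /eqP E; apply/setP => z; rewrite !inE E.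
have sym : forall x y, (y \in @leaf R n T x) = (x \in @leaf R n T y).
  by move=> x y; rewrite !inE eq_sym.
have pos : forall y, #|@leaf R n T y|%:R != 0 :> R.
  by move=> y; rewrite pnatr_eq0 -lt0n; apply/card_gt0P; exists y; rewrite inE.
under eq_bigr do rewrite mulr_suml.
transitivity (\sum_x \sum_(y in @leaf R n T x) G y / #|@leaf R n T y|%:R).
  apply: eq_bigr => x _; apply: eq_bigr => y yx; by rewrite (cx _ _ yx).
under eq_bigr do rewrite big_mkcond /=.
rewrite exchange_big; apply: eq_bigr => y _.
rewrite -big_mkcond /=.
rewrite (eq_bigl (fun x => x \in @leaf R n T y)); last by move=> x; rewrite /= sym.
by rewrite sumr_const -(mulr_natr (G y / #|@leaf R n T y|%:R)) divfK.
Qed.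

Lemma per_x (T : pdt n) x :
  (\sum_i leafvec (R:=R) T x i) ^+ 2 <=
  (\sum_(y in @leaf R n T x) ((\sum_i @X R n y i) ^+ 2 - n%:R + 2 * (depth T)%:R))
     / #|@leaf R n T x|%:R.
Proof.
set L := @leaf R n T x; set s : R := #|L|%:R.
have xL : x \in L by rewrite inE.
have spos : 0 < s by rewrite ltr0n; apply/card_gt0P; exists x.
have cL : closed3 L.
  move=> y z w; rewrite !inE => /eqP Ey /eqP Ez /eqP Ew.
  by rewrite reach_xor3 ?Ey ?Ez ?Ew.
have cb : (2 ^ n <= #|L| * 2 ^ depth T)%N.
  have := @card_leaf R n T _ _ closed_setT (in_setT x).
  by rewrite cardsT card_ffun card_bool card_ord setTI.
have hc := @core R n L _ cL cb.
set g := fun y => \sum_i @X R n y i.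
have E1 : \sum_i leafvec (R:=R) T x i = (\sum_(y in L) g y) / s.
  rewrite /leafvec -mulr_suml exchange_big /=; congr (_ / _).
  by apply: eq_big => [y|y _]; rewrite ?inE.
have E2 : \sum_(y in L) \sum_(z in L) (\sum_i (@X R n y i - @X R n z i)) ^+ 2 / 2 =
          s * \sum_(y in L) g y ^+ 2 - (\sum_(y in L) g y) ^+ 2.
  transitivity ((\sum_(y in L) \sum_(z in L) (g y - g z) * (g y - g z)) / 2).
    rewrite mulr_suml; apply: eq_bigr => y _; rewrite mulr_suml; apply: eq_bigr => z _.
    by rewrite sumrB expr2.
  rewrite var_expand; under eq_bigr do rewrite -expr2.
  by rewrite -/s; field.
have E3 : \sum_(y in L) (g y ^+ 2 - n%:R + 2 * (depth T)%:R) =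
          \sum_(y in L) g y ^+ 2 - s * (n%:R - 2 * (depth T)%:R).
  have sc : forall c : R, \sum_(y in L) c = s * c by move=> c; rewrite sumr_const mulr_natl.
  rewrite big_split /= sumrB !sc; ring.
rewrite E1 E3; rewrite E2 in hc.
set a := \sum_(y in L) g y in hc *; set q := \sum_(y in L) g y ^+ 2 in hc *.
set c := n%:R - 2 * (depth T)%:R in hc *.
rewrite -subr_ge0.
have -> : (q - s * c) / s - (a / s) ^+ 2 = (s * q - a ^+ 2 - s ^+ 2 * c) / s ^+ 2.
  by field; rewrite gt_eqF.
apply: divr_ge0; last exact: sqr_ge0.
by rewrite subr_ge0; move: hc; rewrite -/s.
Qed.

End Main.

Theorem lemma1 (R : realFieldType) (n d : nat) (T : pdt n) :
  depth T = d ->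
  leafExp (R := R) T (fun l => (\sum_(i < n) l i) ^+ 2) <= 2 * d%:R.
Proof.
move=> <-; rewrite /leafExp.
have Npos : 0 < #|{: cube n}|%:R :> R.
  by rewrite ltr0n; apply/card_gt0P; exists [ffun => false].
rewrite ler_pdivrMr //.
set G := fun y : cube n => (\sum_i @X R n y i) ^+ 2 - n%:R + 2 * (depth T)%:R.
apply: (@le_trans _ _ (\sum_x (\sum_(y in @leaf R n T x) G y) / #|@leaf R n T x|%:R)).
  by apply: ler_sum => x _; apply: (@per_x R n T x).
rewrite dc /G.
have sc : forall c : R, \sum_(y : cube n) c = #|{: cube n}|%:R * c.
  by move=> c; rewrite -(sum_setT (fun=> c)) sumr_const cardsT mulr_natl.
rewrite big_split /= sumrB sumg2 !sc.
set N := #|{: cube n}|%:R; rewrite le_eqVlt; apply/orP; left; apply/eqP; ring.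
Qed.
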